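(* Let $\mathbf{w_0}=(s_1s_2\cdots s_{n-1})(s_1s_2\cdots s_{n-2})\cdots(s_1s_2)(s_1)$, viewed as a sequence of $n-1$ runs (the $k$-th run being $s_1s_2\cdots s_{n-k}$). Let $\mathbf{w}$ be the positive distinguished subexpression in $\mathbf{w_0}$ for some $w\in S_n$. If, for some $k\ge 2$, $\mathbf{w}$ uses the transposition $s_i$ from the $k$-th run of $\mathbf{w_0}$, then $\mathbf{w}$ also uses the transposition $s_{i+1}$ from the $(k-1)$-st run of $\mathbf{w_0}$.
   Context: $s_i=(i,\,i+1)\in S_n$ are simple transpositions; $\ell(u)$ is the length of $u$ (minimal number of simple transpositions in an expression for $u$); an expression is reduced if it uses $\ell(u)$ transpositions. $v\le w$ in Bruhat order if some reduced expression for $w$ contains a reduced subexpression for $v$. Given a reduced expression $\mathbf{w}=s_{i_1}\cdots s_{i_k}$ for $w$ and $v\le w$, a reduced subexpression $\mathbf{v}=s_{i_{j_1}}\cdots s_{i_{j_m}}$ ($1\le j_1<\dots<j_m\le k$) for $v$ is positive distinguished if, for every $1\le r\le m+1$ and every $p$ with $j_{r-1}\le p<j_r$ (with conventions $j_0=0$, $j_{m+1}=k+1$) such that $\ell(s_{i_p}s_{i_{j_r}}\cdots s_{i_{j_m}})<\ell(s_{i_{j_r}}\cdots s_{i_{j_m}})$, one has $p=j_{r-1}$. For every $v\le w$ and reduced expression of $w$ there is a unique positive distinguished subexpression for $v$ (informally, the leftmost reduced subexpression). *)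

(* Defs.v *)
From mathcomp Require Import all_boot all_order all_fingroup.
Set Implicit Arguments. Unset Strict Implicit. Unset Printing Implicit Defensive.
Local Open Scope group_scope.

(* Simple transposition s_i = (i, i+1) in S_n, with the paper's 1-indexing:
   points 1..n of the paper are the ordinals 0..n-1 of 'I_n, so s_i swaps
   ordinals i-1 and i.  For indices outside 1 <= i <= n-1 it is the identity
   (never used: all letters considered are in range). *)
Definition simple_tr (n i : nat) : 'S_n :=
  match @insub nat (fun x => x < n) _ i.-1, @insub nat (fun x => x < n) _ i with
  | Some a, Some b => tperm (a : 'I_n) (b : 'I_n)
  | _, _ => 1
  end.

Definition valid_word (n : nat) (s : seq nat) : bool :=
  all (fun i => (0 < i) && (i < n)) s.

Definition word_prod (n : nat) (s : seq nat) : 'S_n :=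
  \prod_(i <- s) simple_tr n i.

Definition is_expr (n : nat) (s : seq nat) (u : 'S_n) : Prop :=
  valid_word n s /\ word_prod n s = u.

Definition reduced_expr (n : nat) (s : seq nat) (u : 'S_n) : Prop :=
  is_expr s u /\ forall t, is_expr t u -> size s <= size t.

(* l(a) < l(b), with l the minimal number of simple transpositions in an
   expression: some expression of a is shorter than every expression of b. *)
Definition len_lt (n : nat) (a b : 'S_n) : Prop :=
  exists s, is_expr s a /\ forall t, is_expr t b -> size s < size t.

Definition run (n k : nat) : seq nat := iota 1 (n - k).
Definition w0_word (n : nat) : seq nat := flatten [seq run n k | k <- iota 1 n.-1].

(* 0-indexed position in w0_word n of the letter s_i of the k-th run
   (1 <= k <= n-1, 1 <= i <= n-k). *)
Definition w0_pos (n k i : nat) : nat := \sum_(1 <= j < k) (n - j) + i.-1.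

(* A subexpression of w0 is encoded by a bit mask m (size m = size w0):
   position p is used iff nth false m p.  The product of the letters used
   strictly after position p (i.e. s_{i_{j_r}} ... s_{i_{j_m}}, j_r the first
   used position > p). *)
Definition suffix_prod (n : nat) (m : bitseq) (p : nat) : 'S_n :=
  word_prod n (mask (drop p.+1 m) (drop p.+1 (w0_word n))).

(* Positive distinguished condition: for every position p with
   j_{r-1} <= p < j_r and l(s_{i_p} s_{i_{j_r}}...s_{i_{j_m}}) <
   l(s_{i_{j_r}}...s_{i_{j_m}}), one has p = j_{r-1}; equivalently, for every
   position p NOT used by the subexpression the length inequality fails. *)
Definition pos_dist (n : nat) (m : bitseq) : Prop :=
  forall p, p < size (w0_word n) -> ~~ nth false m p ->
    ~ len_lt (simple_tr n (nth 0 (w0_word n) p) * suffix_prod n m p)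
             (suffix_prod n m p).

Definition pds_for (n : nat) (w : 'S_n) (m : bitseq) : Prop :=
  [/\ size m = size (w0_word n),
      reduced_expr (mask m (w0_word n)) w
    & pos_dist n m].

(* Main.v *)
Require Import Defs.
From mathcomp Require Import all_boot all_order all_fingroup.
From mathcomp Require Import zify.
Set Implicit Arguments. Unset Strict Implicit. Unset Printing Implicit Defensive.
Definition sw (j x : nat) := if x == j.-1 then j else if x == j then j.-1 else x.

Lemma swE j x : sw j x = if x == j.-1 then j else if x == j then j.-1 else x.
Proof. by []. Qed.

Lemma sw_inv j x : 0 < j -> sw j (sw j x) = x.
Proof. move=> hj; rewrite !swE; do ! (case: eqP => /=); lia. Qed.

Lemma sw_out j x : x != j.-1 -> x != j -> sw j x = x.
Proof. by rewrite swE => /negbTE -> /negbTE ->. Qed.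

Lemma comb (e : nat -> nat -> nat) (mb : nat -> bool) (N bK M i : nat) :
  0 < i -> i < M -> M < N ->
  (forall t, t < M -> forall x, x < N -> e (bK + t) x =
      if mb (bK + t) then e (bK + t.+1) (sw t.+1 x) else e (bK + t.+1) x) ->
  (forall t, t < M.-1 -> forall x, x < N -> e (bK + M + t) x =
      if mb (bK + M + t) then e (bK + M + t.+1) (sw t.+1 x) else e (bK + M + t.+1) x) ->
  (forall t, t < M -> e (bK + t.+1) t < e (bK + t.+1) t.+1) ->
  (forall t, t < M.-1 -> e (bK + M + t.+1) t < e (bK + M + t.+1) t.+1) ->
  mb (bK + M + i.-1) -> ~~ mb (bK + i) -> False.
Proof.
move=> i0 iM MN HsK Hsk HaK Hak Hused Hun.
pose W t := e (bK + M + t). pose U t := e (bK + t).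
set c := W i.-1 i.
have hW1 : forall x, x < N -> W i.-1 x = W i (sw i x).
  move=> x hx; rewrite /W Hsk ?Hused //; [by rewrite prednK | lia].
have ha := Hak i.-1 ltac:(lia); rewrite prednK // in ha.
have hc : c < W i.-1 i.-1.
  rewrite /c !hW1; try lia. rewrite !swE eqxx.
  have -> : (i == i.-1) = false by lia.
  by rewrite eqxx.
have C1 : forall d, d <= i.-1 -> W (i.-1 - d) i = c /\ exists2 x, x < i & c < W (i.-1 - d) x.
  elim=> [|d IH] hd.
    by rewrite subn0; split => //; exists i.-1 => //; lia.
  have [IH1 [x hx1 hx2]] := IH ltac:(lia).
  have ht : i.-1 - d.+1 < M.-1 by lia.
  have e1 : (i.-1 - d.+1).+1 = i.-1 - d by lia.
  have HW : forall y, y < N -> W (i.-1 - d.+1) y =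
      if mb (bK + M + (i.-1 - d.+1)) then W (i.-1 - d) (sw (i.-1 - d) y) else W (i.-1 - d) y.
    by move=> y hy; rewrite /W Hsk // e1.
  split.
    rewrite HW; last by lia.
    rewrite sw_out; [by case: ifP | lia | lia].
  case hm: (mb (bK + M + (i.-1 - d.+1))) in HW.
    exists (sw (i.-1 - d) x); first by rewrite swE; do ! case: eqP => /=; lia.
    rewrite HW; last by rewrite swE; do ! case: eqP => /=; lia.
    rewrite sw_inv //; lia.
  by exists x => //; rewrite HW //; lia.
have C2 : forall d, d <= M - i.+1 -> forall x, x <= i -> U (M - d) x = U M x.
  elim=> [|d IH] hd x hx; first by rewrite subn0.
  rewrite -(IH ltac:(lia) x hx).
  have e1 : (M - d.+1).+1 = M - d by lia.
  rewrite /U HsK; try lia.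
  rewrite e1 sw_out; [by case: ifP | lia | lia].
have hUi : forall x, x < N -> U i x = U i.+1 x.
  by move=> x hx; rewrite /U HsK // (negbTE Hun).
have C3 : forall d, d <= i -> [/\ U (i - d) (i - d) <= c,
    forall x, x < i - d -> U (i - d) x = U i.+1 x &
    forall x, i - d <= x < i -> U i.+1 x < c].
  elim=> [|d IH] hd.
    rewrite subn0; split.
    - rewrite hUi; last by lia.
      have := C2 (M - i.+1) (leqnn _) i (leqnn _).
      have -> : M - (M - i.+1) = i.+1 by lia.
      move=> ->; have := C1 i.-1 (leqnn _); rewrite subnn => -[<- _].
      by rewrite /U /W addn0.
    - by move=> x hx; rewrite hUi //; lia.
    - by move=> x; lia.
  have [IH1 IH2 IH3] := IH ltac:(lia).
  have e1 : (i - d.+1).+1 = i - d by lia.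
  have ha2 := HaK (i - d.+1) ltac:(lia); rewrite e1 in ha2.
  have HU : forall y, y < N -> U (i - d.+1) y =
      if mb (bK + (i - d.+1)) then U (i - d) (sw (i - d) y) else U (i - d) y.
    by move=> y hy; rewrite /U HsK ?e1 //; lia.
  split.
  - rewrite HU; last by lia.
    have hsw : sw (i - d) (i - d.+1) = i - d.
      by rewrite swE (_ : (i - d).-1 = i - d.+1) ?eqxx //; lia.
    rewrite hsw; case: ifP => _; rewrite /U in IH1 ha2 *; lia.
  - move=> x hx; rewrite HU; last by lia.
    rewrite sw_out; try lia. rewrite -IH2; last by lia. by case: ifP.
  - move=> x hx; case: (ltnP x (i - d)) => h2; last by apply: IH3; lia.
    have -> : x = i - d.+1 by lia.
    rewrite -IH2; last by lia.
    rewrite /U in IH1 ha2 *; lia.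
have [_ [x hx1 hx2]] := C1 i.-1 (leqnn _).
rewrite subnn in hx2.
have [_ _ H3] := C3 i (leqnn _).
have := H3 x ltac:(lia).
have := C2 (M - i.+1) (leqnn _) x ltac:(lia).
have -> : M - (M - i.+1) = i.+1 by lia.
rewrite /U /W addn0 in hx2 * => ->; lia.
Qed.


Lemma w0_split n k : 1 <= k <= n.-1 -> w0_word n =
  flatten [seq run n j | j <- iota 1 k.-1] ++ run n k ++
  flatten [seq run n j | j <- iota k.+1 (n.-1 - k)].
Proof.
move=> hk; rewrite /w0_word.
have -> : n.-1 = k.-1 + (n.-1 - k).+1 by lia.
rewrite iotaD map_cat flatten_cat; congr (_ ++ _).
have -> : 1 + k.-1 = k by lia.
by rewrite /= (_ : k.-1 + (n.-1 - k).+1 - k = n.-1 - k) //; lia.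
Qed.

Lemma size_pre n k : size (flatten [seq run n j | j <- iota 1 k.-1]) = \sum_(1 <= j < k) (n - j).
Proof.
rewrite size_flatten /shape -map_comp sumnE big_map /index_iota subn1.
by apply: eq_bigr => j _; rewrite /= /run size_iota.
Qed.

Lemma nth_w0 n k t : 1 <= k <= n.-1 -> t < n - k ->
  nth 0 (w0_word n) (\sum_(1 <= j < k) (n - j) + t) = t.+1 /\
  \sum_(1 <= j < k) (n - j) + t < size (w0_word n).
Proof.
move=> hk ht; rewrite (w0_split hk) nth_cat size_cat size_pre.
rewrite ltnNge leq_addr /= addKn nth_cat /run size_iota ht nth_iota // size_cat size_iota.
split; [by rewrite add1n | lia].
Qed.

Lemma pos_rec n K : 1 <= K -> \sum_(1 <= j < K.+1) (n - j) = \sum_(1 <= j < K) (n - j) + (n - K).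
Proof. by move=> hK; rewrite big_nat_recr. Qed.

Local Open Scope group_scope.
Section S.
Variable n : nat.
Local Notation N := n.+1.
Lemma simple_trE j : 0 < j < N -> simple_tr N j = tperm (inord j.-1) (inord j).
Proof.
case/andP=> j0 jn; rewrite /simple_tr.
have h1 : j.-1 < N by lia.
rewrite (insubT (fun x => x < N) h1) (insubT (fun x => x < N) jn).
by congr tperm; apply: val_inj; rewrite /= inordK.
Qed.
Definition inv (u : 'S_N) : nat := \sum_(x : 'I_N) \sum_(y : 'I_N) ((x < y) && (u y < u x)).
Lemma inv1 : inv 1 = 0.
Proof. rewrite /inv big1 // => x _; rewrite big1 // => y _; rewrite !perm1; case: (ltnP x y) => h //=; by rewrite ltnNge ltnW. Qed.
Lemma pw (a b x y : 'I_N) (u : 'S_N) : val b = (val a).+1 -> u a < u b ->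
  ((tperm a b x < tperm a b y) && (u y < u x)) = ((x<y) && (u y<u x)) + ((x==b)&&(y==a)) :> nat.
Proof.
move=> hb hu.
case: tpermP => [->|->|xa xb]; case: tpermP => [->|->|ya yb]; rewrite ?eqxx /=.
all: rewrite -?val_eqE /= ?hb.
all: try (move/eqP: xa; rewrite -val_eqE /= => xa).
all: try (move/eqP: xb; rewrite -val_eqE /= hb => xb).
all: try (move/eqP: ya; rewrite -val_eqE /= => ya).
all: try (move/eqP: yb; rewrite -val_eqE /= hb => yb).
all: move: hu; rewrite ?ltnn ?andbF ?andbT /=.
all: try lia.
all: move=> _; case: (nat_of_ord (u _) < nat_of_ord (u _)); rewrite ?andbT ?andbF /=; rewrite -?(val_eqE y a) -?(val_eqE x (Ordinal _)) /=; change (\val a) with (nat_of_ord a) in *; lia.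
Qed.

Lemma inv_asc j (u : 'S_N) : 0 < j < N -> u (inord j.-1) < u (inord j) ->
  inv (simple_tr N j * u) = (inv u).+1.
Proof.
move=> hj hu; rewrite simple_trE //.
set a : 'I_N := inord j.-1; set b : 'I_N := inord j.
have hb : (b : nat) = (a : nat).+1 by rewrite /a /b !inordK; lia.
rewrite -[(inv u).+1]addn1 /inv (reindex_inj (@perm_inj _ (tperm a b))).
under eq_bigr => x _ do rewrite (reindex_inj (@perm_inj _ (tperm a b))).
under eq_bigr => x _ do under eq_bigr => y _ do rewrite !permM !tpermK pw //.
under eq_bigr => x _ do rewrite big_split /=.
rewrite big_split /=; congr (_ + _).
rewrite (bigD1 b) //= [X in _ + X = _]big1 => [|x xb]; last first.
  by rewrite big1 // => y _; rewrite (negbTE xb).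
rewrite (bigD1 a) //= [X in _ + X + _ = _]big1 => [|y ya]; last by rewrite (negbTE ya) andbF.
by rewrite !eqxx.
Qed.

Lemma tpermM2 (a b : 'I_N) : tperm a b * tperm a b = 1.
Proof. by apply/permP => x; rewrite permM tpermK perm1. Qed.

Lemma str2 j : 0 < j < N -> simple_tr N j * simple_tr N j = 1.
Proof. by move=> hj; rewrite simple_trE // tpermM2. Qed.

Lemma str_app j (u : 'S_N) x : 0 < j < N -> (simple_tr N j * u) x = u (simple_tr N j x).
Proof. by move=> hj; rewrite permM. Qed.

Lemma inv_desc j (u : 'S_N) : 0 < j < N -> u (inord j) < u (inord j.-1) ->
  inv u = (inv (simple_tr N j * u)).+1.
Proof.
move=> hj hu.
have -> : u = simple_tr N j * (simple_tr N j * u) by rewrite mulgA str2 // mul1g.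
rewrite inv_asc // ?mulgA ?str2 ?mul1g //.
rewrite !permM simple_trE // tpermL tpermR //.
Qed.

Lemma inv_step j (u : 'S_N) : 0 < j < N -> inv (simple_tr N j * u) <= (inv u).+1.
Proof.
move=> hj.
have hne : nat_of_ord (u (inord j.-1)) != u (inord j).
  rewrite val_eqE (inj_eq (@perm_inj _ u)) -val_eqE /= !inordK; lia.
case: (ltngtP (u (inord j.-1)) (u (inord j))) hne => // h _.
  by rewrite inv_asc.
by rewrite (inv_desc hj h); lia.
Qed.

Lemma word_prod_cons j s : word_prod N (j :: s) = simple_tr N j * word_prod N s.
Proof. by rewrite /word_prod big_cons. Qed.

Lemma word_prod_cat s t : word_prod N (s ++ t) = word_prod N s * word_prod N t.
Proof. by rewrite /word_prod big_cat. Qed.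

Lemma inv_word s u : valid_word N s -> inv (word_prod N s * u) <= size s + inv u.
Proof.
elim: s => [|j s IH] /=; first by rewrite /word_prod big_nil mul1g.
case/andP=> hj hs; rewrite word_prod_cons -mulgA.
apply: leq_trans (inv_step (word_prod N s * u) hj) _; have := IH hs; lia.
Qed.

Lemma inv_expr s u : is_expr s u -> inv u <= size s.
Proof. by case=> hs <-; have := inv_word (1 : 'S_N) hs; rewrite mulg1 inv1 addn0. Qed.

Lemma incr_id (u : 'S_N) : (forall j, 0 < j < N -> u (inord j.-1) < u (inord j)) -> u = 1.
Proof.
move=> h.
have lo : forall x, x < N -> x <= u (inord x).
  elim=> [|x IH] hx //.
  have := h x.+1; rewrite /=; move=> /(_ hx) h1; have := IH (ltnW hx); lia.
have hi : forall d x, x + d = n -> u (inord x) <= x.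
  elim=> [|d IH] x hx; first by rewrite addn0 in hx; rewrite hx; have := ltn_ord (u (inord n)); lia.
  have := IH x.+1 ltac:(lia); have := h x.+1 ltac:(lia); rewrite /=; lia.
apply/permP => x; rewrite perm1; apply: val_inj => /=.
have := lo x (ltn_ord x); have := hi (n - x) x ltac:(have := ltn_ord x; lia).
by rewrite inord_val; lia.
Qed.

Lemma has_word (u : 'S_N) : exists s, [/\ valid_word N s, word_prod N s = u & size s = inv u].
Proof.
have [k hk] : exists k, inv u = k by exists (inv u).
elim: k u hk => [|k IH] u hk.
  case: (boolP [forall j : 'I_N, (0 < (j : nat)) ==> (u (inord j.-1) < u (inord j))]).
    move/forallP => h; exists [::]; split; [by [] | | by rewrite hk].
    rewrite /word_prod big_nil; apply/esym/incr_id => j hj.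
    have := h (inord j); rewrite inordK; last by case/andP: hj.
    by case/andP: hj => -> _ /implyP; apply.
  move/forallPn => [j]; rewrite negb_imply => /andP [j0 hj].
  have hjj : 0 < j < N by rewrite j0 ltn_ord.
  have hne : nat_of_ord (u (inord j.-1)) != u (inord j).
    rewrite val_eqE (inj_eq (@perm_inj _ u)) -val_eqE /= !inordK; lia.
  have h2 : u (inord j) < u (inord j.-1) by move: hj hne; rewrite -leqNgt; lia.
  have := inv_desc hjj h2; rewrite hk; lia.
have : 0 < inv u by rewrite hk.
case: (boolP [forall j : 'I_N, (0 < (j : nat)) ==> (u (inord j.-1) < u (inord j))]).
  move/forallP => h; have -> : u = 1.
    apply/incr_id => j hj.
    have := h (inord j); rewrite inordK; last by case/andP: hj.
    by case/andP: hj => -> _ /implyP; apply.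
  by rewrite inv1.
move/forallPn => [j]; rewrite negb_imply => /andP [j0 hj] _.
have hjj : 0 < j < N by rewrite j0 ltn_ord.
have hne : nat_of_ord (u (inord j.-1)) != u (inord j).
  rewrite val_eqE (inj_eq (@perm_inj _ u)) -val_eqE /= !inordK; lia.
have h2 : u (inord j) < u (inord j.-1) by move: hj hne; rewrite -leqNgt; lia.
have e := inv_desc hjj h2.
have [s [hs1 hs2 hs3]] := IH (simple_tr N j * u) ltac:(rewrite hk in e; lia).
exists (nat_of_ord j :: s); split => /=.
- by rewrite hjj.
- by rewrite word_prod_cons hs2 mulgA str2 // mul1g.
- by rewrite hs3 e.
Qed.

Lemma len_lt_inv (a b : 'S_N) : inv a < inv b -> len_lt a b.
Proof.
move=> h; have [s [h1 h2 h3]] := has_word a.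
exists s; split; first by [].
move=> t ht; have := inv_expr ht; lia.
Qed.

Lemma reduced_inv s u : reduced_expr s u -> inv u = size s.
Proof.
case=> he hmin; have := inv_expr he.
have [t [h1 h2 h3]] := has_word u.
have := hmin t (conj h1 h2); lia.
Qed.

Lemma inv_suffix x y : valid_word N (x ++ y) -> inv (word_prod N (x ++ y)) = size (x ++ y) ->
  inv (word_prod N y) = size y.
Proof.
rewrite /valid_word all_cat => /andP [hx hy].
rewrite word_prod_cat size_cat => e.
have := inv_word (word_prod N y) hx; have := inv_expr (conj hy (erefl _)); lia.
Qed.

Definition V (m : bitseq) (p : nat) : 'S_N := word_prod N (mask (drop p m) (drop p (w0_word N))).

Lemma valid_w0 : valid_word N (w0_word N).
Proof. by apply/allP => x /flatten_mapP [k]; rewrite mem_iota /run mem_iota => hk hx; lia. Qed.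

Lemma letter_ok p : p < size (w0_word N) -> 0 < nth 0 (w0_word N) p < N.
Proof. by move=> hp; have := allP valid_w0 _ (mem_nth 0 hp). Qed.

Lemma Vstep m p : size m = size (w0_word N) -> p < size (w0_word N) ->
  V m p = (if nth false m p then simple_tr N (nth 0 (w0_word N) p) else 1) * V m p.+1.
Proof.
move=> hs hp; rewrite /V (drop_nth false) ?hs // (drop_nth 0) //.
by case: nth => /=; rewrite ?word_prod_cons ?mul1g.
Qed.

Lemma tperm_inord j x : 0 < j < N -> x < N ->
  tperm (inord j.-1) (inord j) (inord x : 'I_N) = inord (sw j x).
Proof.
move=> hj hx.
have e1 : (inord x == inord j.-1 :> 'I_N) = (x == j.-1) by rewrite -val_eqE /= !inordK //; lia.
have e2 : (inord x == inord j :> 'I_N) = (x == j) by rewrite -val_eqE /= !inordK //; lia.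
rewrite swE; case: tpermP => [/eqP|/eqP|/eqP h1 /eqP h2].
- by rewrite e1 => /eqP ->; rewrite eqxx.
- rewrite e2 => /eqP ->; have -> : (j == j.-1) = false by lia.
  by rewrite eqxx.
- by rewrite e1 in h1; rewrite e2 in h2; rewrite (negbTE h1) (negbTE h2).
Qed.

Lemma e_step m p x : size m = size (w0_word N) -> p < size (w0_word N) -> x < N ->
  nat_of_ord (V m p (inord x)) = if nth false m p
    then nat_of_ord (V m p.+1 (inord (sw (nth 0 (w0_word N) p) x)))
    else nat_of_ord (V m p.+1 (inord x)).
Proof.
move=> hs hp hx; rewrite (Vstep hs hp); case: nth; rewrite ?mul1g //.
by rewrite permM simple_trE ?letter_ok // tperm_inord // letter_ok.
Qed.

Lemma inv_V (w : 'S_N) m p : pds_for w m -> inv (V m p) = size (mask (drop p m) (drop p (w0_word N))).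
Proof.
case=> hs hred _.
have hw := reduced_inv hred; case: hred => [[hv hp] _].
have e : mask m (w0_word N) = mask (take p m) (take p (w0_word N)) ++
                               mask (drop p m) (drop p (w0_word N)).
  by rewrite -mask_cat ?size_take ?hs // !cat_take_drop.
rewrite e in hv hp hw; apply: inv_suffix hv _; by rewrite hp.
Qed.

Lemma asc (w : 'S_N) m p : pds_for w m -> p < size (w0_word N) ->
  nat_of_ord (V m p.+1 (inord (nth 0 (w0_word N) p).-1)) < V m p.+1 (inord (nth 0 (w0_word N) p)).
Proof.
move=> hpds hp; have hj := letter_ok hp.
set j := nth 0 (w0_word N) p in hj *.
have hne : nat_of_ord (V m p.+1 (inord j.-1)) != V m p.+1 (inord j).
  rewrite val_eqE (inj_eq (@perm_inj _ _)) -val_eqE /= !inordK; lia.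
rewrite ltn_neqAle hne /= leqNgt; apply/negP => hd.
have hid := inv_desc hj hd.
case: (hpds) => hs hred hpos.
case hb: (nth false m p).
  have e1 := inv_V p.+1 hpds; have e2 := inv_V p hpds.
  rewrite (Vstep hs hp) hb -/j in e2.
  rewrite (drop_nth false) ?hs // (drop_nth 0) // hb /= in e2.
  rewrite e2 e1 in hid; lia.
apply: (hpos p hp); first by rewrite hb.
apply: len_lt_inv.
change (suffix_prod N m p) with (V m p.+1); rewrite hid; exact: ltnSn.
Qed.
End S.

Local Close Scope group_scope.
Theorem mainTheorem8 (n : nat) (w : 'S_n) (m : bitseq) :
  pds_for w m ->
  forall k i, 2 <= k -> k <= n.-1 -> 1 <= i -> i <= n - k ->
    nth false m (w0_pos n k i) ->
    nth false m (w0_pos n k.-1 i.+1).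
Proof.
case: n w m => [|n] w m hpds k i hk2 hkn hi1 hik hused; first by lia.
have hs : size m = size (w0_word n.+1) by case: hpds.
set K := k.-1; set M := n.+1 - K; set bK := \sum_(1 <= j < K) (n.+1 - j).
have hkK : k = K.+1 by rewrite /K; lia.
have posk : \sum_(1 <= j < k) (n.+1 - j) = bK + M by rewrite hkK pos_rec //; lia.
case hb : (nth false m (w0_pos n.+1 k.-1 i.+1)) => //; exfalso.
have hK : 1 <= K <= n.+1.-1 by rewrite /K; lia.
have hk : 1 <= k <= n.+1.-1 by lia.
refine (@comb (fun p x => nat_of_ord (@V n m p (inord x))) (nth false m) n.+1 bK M i _ _ _ _ _ _ _ _ _).
- by [].
- rewrite /M /K; lia.
- rewrite /M /K; lia.
- move=> t ht x hx; have [e1 e2] := nth_w0 (t := t) hK ltac:(rewrite /M in ht; lia).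
  by rewrite (e_step hs e2 hx) e1 addnS.
- move=> t ht x hx; have [e1 e2] := nth_w0 (t := t) hk ltac:(rewrite /M /K in ht; lia).
  rewrite posk in e1 e2.
  by rewrite (e_step hs e2 hx) e1 addnS.
- move=> t ht; have [e1 e2] := nth_w0 (t := t) hK ltac:(rewrite /M in ht; lia).
  by have := asc hpds e2; rewrite e1 addnS.
- move=> t ht; have [e1 e2] := nth_w0 (t := t) hk ltac:(rewrite /M /K in ht; lia).
  rewrite posk in e1 e2.
  by have := asc hpds e2; rewrite e1 addnS.
- by move: hused; rewrite /w0_pos posk.
- by move: hb; rewrite /w0_pos /= => ->.
Qed.
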